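(* Let $N\geq2$, let $\mathcal{H}_{X_1},\dots,\mathcal{H}_{X_N}$ be finite-dimensional Hilbert spaces and let $\rho=|V\rangle\langle V|$ be a pure state on $\mathcal{H}_{X_1}\otimes\cdots\otimes\mathcal{H}_{X_N}$ such that $I(X_1:X_j)_\rho=0$ for all $j\neq1$. For each $i$, let $\lambda^i_1\geq\lambda^i_2\geq\cdots$ be the eigenvalues of $\rho_{X_i}$ in decreasing order and $|e^i_1\rangle,|e^i_2\rangle,\dots$ a corresponding orthonormal eigenbasis of $\mathcal{H}_{X_i}$. Write $|V\rangle=\sum_{x_1,\dots,x_N}V_{x_1\dots x_N}|e^1_{x_1}\rangle\otimes\cdots\otimes|e^N_{x_N}\rangle$, and set $\epsilon_i=1-\lambda^i_1$ and $\varepsilon=\sum_{i=1}^N\epsilon_i$. Then $$\sum_{x_1>1}|V_{x_1 1\dots1}|^2\geq\epsilon_1(1+\epsilon_1-\varepsilon).$$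
   Context: $\rho_{\mathcal X}$ denotes the reduced state (partial trace over the factors not in $\mathcal X$). Von Neumann entropy of a density operator $\sigma$ is $-\mathrm{Tr}[\sigma\log\sigma]$ (binary logarithm); $H(\mathcal X)_\rho$ is the entropy of $\rho_{\mathcal X}$, and $I(X_i:X_j)_\rho=H(X_i)_\rho+H(X_j)_\rho-H(X_iX_j)_\rho$. The sum runs over indices $x_1=2,\dots,\dim\mathcal{H}_{X_1}$, with all other indices equal to $1$. *)

(* Defs.v *)
From HB Require Import structures.
From mathcomp Require Import all_boot all_order all_algebra.
From mathcomp Require Import spectral.
From mathcomp Require Import complex.
From mathcomp Require Import reals exp.

Set Implicit Arguments.
Unset Strict Implicit.
Unset Printing Implicit Defensive.

Import Order.TTheory GRing.Theory Num.Theory Num.Def.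
Local Open Scope ring_scope.

Section Quantum.
Variable R : realType.
Local Notation C := (R[i]).

Definition log2 (t : R) : R := ln t / ln 2.
Definition xlog2x (t : R) : R := if t == 0 then 0 else t * log2 t.

Definition mx_of_fun (T : finType) (f : T -> T -> C) : 'M[C]_#|T| :=
  \matrix_(a, b) f (enum_val a) (enum_val b).

(* von Neumann entropy -Tr[s log2 s] of a (Hermitian, PSD) density operator,
   computed from its eigenvalues (with multiplicity), given by the spectral
   decomposition of mathcomp's spectral.v *)
Definition vN_entropy (T : finType) (f : T -> T -> C) : R :=
  - \sum_(k < #|T|) xlog2x (complex.Re (spectral_diag (mx_of_fun f) 0 k)).

Variables (N : nat) (d : 'I_N -> nat).

(* computational basis indices of H_{X_1} (x) ... (x) H_{X_N} *)
Definition Idx := {dffun forall i : 'I_N, 'I_(d i)}.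

(* reduced state rho_{X_i} of rho = |V><V| *)
Definition red1 (V : Idx -> C) (i : 'I_N) (a b : 'I_(d i)) : C :=
  \sum_(x : Idx | x i == a) \sum_(y : Idx | (y i == b) &&
        [forall k, (k != i) ==> (val (x k) == val (y k))])
     V x * conjC (V y).

(* reduced state rho_{X_i X_j} of rho = |V><V| *)
Definition red2 (V : Idx -> C) (i j : 'I_N)
    (p q : ('I_(d i) * 'I_(d j))%type) : C :=
  \sum_(x : Idx | (x i == p.1) && (x j == p.2))
   \sum_(y : Idx | [&& y i == q.1, y j == q.2 &
        [forall k, ((k != i) && (k != j)) ==> (val (x k) == val (y k))]])
     V x * conjC (V y).

Definition H1 (V : Idx -> C) (i : 'I_N) : R := vN_entropy (@red1 V i).
Definition H2 (V : Idx -> C) (i j : 'I_N) : R := vN_entropy (@red2 V i j).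

Definition mutinf (V : Idx -> C) (i j : 'I_N) : R :=
  H1 V i + H1 V j - H2 V i j.

(* coefficients of |V> in the product basis e^1_{x_1} (x) ... (x) e^N_{x_N},
   where e^i_k is the k-th row of the unitary matrix U i *)
Definition coeff (U : forall i : 'I_N, 'M[C]_(d i)) (V : Idx -> C) (x : Idx) : C :=
  \sum_(y : Idx) (\prod_(i < N) conjC (U i (x i) (y i))) * V y.

Definition normsq (z : C) : R := complex.Re z ^+ 2 + complex.Im z ^+ 2.

End Quantum.

Definition party1 (N : nat) (hN : (2 <= N)%N) : 'I_N :=
  Ordinal (leq_trans (isT : (1 < 2)%N) hN).

(* Main.v *)
Require Import Defs.
From HB Require Import structures.
From mathcomp Require Import all_boot all_order all_algebra.
From mathcomp Require Import spectral complex.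
From mathcomp Require Import reals exp.
From mathcomp Require Import ring lra.

Import Order.TTheory GRing.Theory Num.Theory Num.Def.
Local Open Scope ring_scope.
Local Open Scope sesquilinear_scope.

Section E.
Variable R : realType.
Lemma ln2_gt0 : 0 < ln (2 : R).
Proof. by apply: ln_gt0; rewrite ltr1n. Qed.
Lemma xlog2xE (p : R) : xlog2x p = p * log2 p.
Proof. by rewrite /xlog2x; case: eqP => // ->; rewrite mul0r. Qed.

Lemma elem (p q : R) : 0 <= p -> 0 < q ->
  0 <= p * ln p - p * ln q - (p - q) /\ (p * ln p - p * ln q - (p - q) = 0 -> p = q).
Proof.
move=> p0 q0; have [->|pn0] := eqVneq p 0.
  rewrite !mul0r !subr0 sub0r sub0r opprK.
 split; first exact: ltW.
  by move=> q00; move: q0; rewrite q00 ltxx.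
have pp : 0 < p by rewrite lt_neqAle eq_sym pn0 p0.
set t := q / p.
have tp : 0 < t by rewrite divr_gt0.
have qE : q = p * t by rewrite /t mulrCA divff ?mulr1.
have lnt : ln t = ln q - ln p by rewrite /t ln_div // ?posrE.
have key : p * ln p - p * ln q - (p - q) = p * (t - 1 - ln t).
  rewrite lnt qE; have -> : ln (p * t) = ln p + ln t by rewrite lnM ?posrE.
  rewrite /t; ring.
rewrite key.
have [t1|tn1] := eqVneq t 1.
  split; first by rewrite t1 ln1 subrr subr0 mulr0.
  by move=> _; rewrite qE t1 mulr1.
have lnt0 : ln t != 0 by rewrite ln_eq0.
have := expR_gt1Dx lnt0; rewrite lnK ?posrE // => hlt.
have hpos : 0 < t - 1 - ln t by lra.
split; first by apply/ltW/mulr_gt0.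
by move=> /eqP; rewrite mulf_eq0 (negbTE pn0) /= => /eqP h; move: hpos; rewrite h ltxx.
Qed.
End E.


Section T.
Variable R : realType.
Local Notation C := (R[i]).

Lemma sumC (I : finType) (F : I -> R) : (\sum_i F i)%:C%C = \sum_i (F i)%:C%C.
Proof. by rewrite rmorph_sum. Qed.
Lemma sumRe (I : finType) (F : I -> C) : complex.Re (\sum_i F i) = \sum_i complex.Re (F i).
Proof. by apply: (big_morph (@complex.Re R)) => // -[a b] [c d]. Qed.
Lemma normsqC (z : C) : (normsq z)%:C%C = conjC z * z.
Proof. by rewrite /normsq add_Re2_Im2 normCKC. Qed.
Lemma normsq_ge0 (z : C) : 0 <= normsq z.
Proof. by rewrite /normsq addr_ge0 // sqr_ge0. Qed.

Variable T : finType.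
Lemma sumT (F : T -> C) : \sum_p F p = \sum_(a < #|T|) F (enum_val a).
Proof. by rewrite (reindex (fun a : 'I_#|T| => enum_val a)) //; exact: onW_bij (enum_val_bij T). Qed.

Variable f : T -> T -> C.
Hypothesis fH : forall p q, f q p = conjC (f p q).

Let A := mx_of_fun f.
Let n := #|T|.
Let P := spectralmx A.
Let s := spectral_diag A.

Lemma A_herm : A \is hermsymmx.
Proof.
apply/is_hermitianmxP; rewrite expr0 scale1r; apply/matrixP => a b.
by rewrite !mxE fH.
Qed.

Lemma A_spec : A = P^t* *m diag_mx s *m P.
Proof.
have := hermitian_normalmx A_herm => /orthomx_spectralP.
by rewrite invmx_unitary ?spectral_unitarymx.
Qed.

Lemma P_unit : P *m P^t* = 1%:M.
Proof. by apply/unitarymxP; exact: spectral_unitarymx. Qed.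
Lemma P_unit' : P^t* *m P = 1%:M.
Proof.
have : P^t* \is unitarymx by rewrite trmxC_unitary spectral_unitarymx.
by move/unitarymxP; rewrite trmxCK.
Qed.

Lemma PA : P *m A = diag_mx s *m P.
Proof. by rewrite {1}A_spec !mulmxA P_unit mul1mx. Qed.

Lemma PA_entry k b : \sum_a P k a * A a b = s 0 k * P k b.
Proof. by have /matrixP/(_ k b) := PA; rewrite mul_diag_mx !mxE. Qed.

Lemma Ainv_entry a b : A a b = \sum_k conjC (P k a) * s 0 k * P k b.
Proof.
rewrite {1}A_spec mxE; apply: eq_bigr => k _.
by rewrite mul_mx_diag !mxE.
Qed.

Lemma PAP_entry k : \sum_a \sum_b P k a * A a b * conjC (P k b) = s 0 k.
Proof.
have : P *m A *m P^t* = diag_mx s by rewrite PA -mulmxA P_unit mulmx1.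
move/matrixP/(_ k k); rewrite !mxE eqxx mulr1n => <-.
rewrite exchange_big /=; apply: eq_bigr => b _.
by rewrite !mxE mulr_suml; apply: eq_bigr => a _.
Qed.

Definition Qf (v : T -> C) := \sum_p \sum_q conjC (v p) * f p q * v q.

Lemma Q_P k : Qf (fun p => conjC (P k (enum_rank p))) = s 0 k.
Proof.
rewrite -PAP_entry /Qf sumT; apply: eq_bigr => a _.
rewrite sumT; apply: eq_bigr => b _.
by rewrite conjCK !enum_valK mxE.
Qed.

Variable u : T -> T -> C.
Hypothesis uorth : forall l l', \sum_p conjC (u l p) * u l' p = (l == l')%:R.
Hypothesis ucompl : forall p p', \sum_l conjC (u l p) * u l p' = (p == p')%:R.

Definition w k l := \sum_b P k b * u l (enum_val b).

Lemma Q_u l : Qf (u l) = \sum_k s 0 k * (conjC (w k l) * w k l).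
Proof.
rewrite /Qf sumT.
under eq_bigr => a _ do rewrite sumT.
transitivity (\sum_a \sum_b \sum_k conjC (u l (enum_val a)) * (conjC (P k a) * s 0 k * P k b) * u l (enum_val b)).
  apply: eq_bigr => a _; apply: eq_bigr => b _.
  have -> : f (enum_val a) (enum_val b) = A a b by rewrite mxE.
  by rewrite Ainv_entry mulr_sumr mulr_suml.
rewrite exchange_big /=; under eq_bigr => b _ do rewrite exchange_big /=.
rewrite exchange_big /=; apply: eq_bigr => k _.
rewrite exchange_big /=.
rewrite /w rmorph_sum /= big_distrl big_distrr /=; apply: eq_bigr => a _.
rewrite big_distrr /= big_distrr /=; apply: eq_bigr => b _.
rewrite rmorphM /=; ring.
Qed.

Lemma enum_val_eq (a b : 'I_#|T|) : (enum_val a == enum_val b) = (a == b).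
Proof. by rewrite (bij_eq (enum_val_bij T)). Qed.

Lemma sum_delta (I : finType) (F : I -> C) a : \sum_b F b * (a == b)%:R = F a.
Proof.
rewrite (bigD1 a) //= eqxx mulr1 big1 ?addr0 // => b /negbTE.
by rewrite eq_sym => ->; rewrite mulr0.
Qed.

Lemma Wrow k : \sum_l conjC (w k l) * w k l = 1.
Proof.
transitivity (\sum_l \sum_(a < #|T|) \sum_(b < #|T|) conjC (P k a) * P k b * (conjC (u l (enum_val a)) * u l (enum_val b))).
  apply: eq_bigr => l _; rewrite /w rmorph_sum big_distrl; apply: eq_bigr => a _.
  rewrite big_distrr; apply: eq_bigr => b _; rewrite rmorphM /=; ring.
rewrite exchange_big /=; under eq_bigr => a _ do rewrite exchange_big /=.
under eq_bigr => a _ do under eq_bigr => b _ do rewrite -mulr_sumr ucompl enum_val_eq.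
under eq_bigr => a _ do rewrite (sum_delta _ (fun b => conjC (P k a) * P k b)).
have /matrixP/(_ k k) := P_unit; rewrite !mxE eqxx mulr1n => <-.
by apply: eq_bigr => a _; rewrite !mxE mulrC.
Qed.

Lemma Wcol l : \sum_k conjC (w k l) * w k l = 1.
Proof.
transitivity (\sum_k \sum_(a < #|T|) \sum_(b < #|T|) conjC (u l (enum_val a)) * u l (enum_val b) * (conjC (P k a) * P k b)).
  apply: eq_bigr => k _; rewrite /w rmorph_sum big_distrl; apply: eq_bigr => a _.
  rewrite big_distrr; apply: eq_bigr => b _; rewrite rmorphM /=; ring.
rewrite exchange_big /=; under eq_bigr => a _ do rewrite exchange_big /=.
transitivity (\sum_(a < #|T|) \sum_(b < #|T|) conjC (u l (enum_val a)) * u l (enum_val b) * (a == b)%:R).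
  apply: eq_bigr => a _; apply: eq_bigr => b _; rewrite -mulr_sumr.
  have /matrixP/(_ a b) := P_unit'; rewrite !mxE => <-.
  by congr (_ * _); apply: eq_bigr => k _; rewrite !mxE.
under eq_bigr => a _ do rewrite (sum_delta _ (fun b : 'I_#|T| => conjC (u l (enum_val a)) * u l (enum_val b))).
by rewrite -(sumT (fun p => conjC (u l p) * u l p)) uorth eqxx.
Qed.

Variable lam : T -> R.
Hypothesis ueig : forall l p, \sum_q f p q * u l q = (lam l)%:C%C * u l p.

Lemma eig_w k l : (s 0 k - (lam l)%:C%C) * w k l = 0.
Proof.
have E1 : \sum_a P k a * \sum_b A a b * u l (enum_val b) = (lam l)%:C%C * w k l.
  rewrite /w mulr_sumr; apply: eq_bigr => a _.
  have -> : \sum_b A a b * u l (enum_val b) = \sum_q f (enum_val a) q * u l q.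
    by rewrite sumT; apply: eq_bigr => b _; rewrite mxE.
  by rewrite ueig; ring.
have E2 : \sum_a P k a * \sum_b A a b * u l (enum_val b) = s 0 k * w k l.
  under eq_bigr => a _ do rewrite mulr_sumr.
  rewrite exchange_big /= /w mulr_sumr; apply: eq_bigr => b _.
  rewrite mulrA -PA_entry mulr_suml; apply: eq_bigr => a _; ring.
by rewrite mulrBl -E2 -E1 subrr.
Qed.

Definition W k l := normsq (w k l).
Definition sr k := complex.Re (s 0 k).

Lemma WC k l : (W k l)%:C%C = conjC (w k l) * w k l.
Proof. exact: normsqC. Qed.
Lemma W_ge0 k l : 0 <= W k l.
Proof. exact: normsq_ge0. Qed.

Lemma WrowR k : \sum_l W k l = 1.
Proof.
have := congr1 (@complex.Re R) (Wrow k).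
by rewrite sumRe; under eq_bigr => l _ do rewrite -WC.
Qed.
Lemma WcolR l : \sum_k W k l = 1.
Proof.
have := congr1 (@complex.Re R) (Wcol l).
by rewrite sumRe; under eq_bigr => k _ do rewrite -WC.
Qed.

Lemma entropy_eig : \sum_k xlog2x (sr k) = \sum_l xlog2x (lam l).
Proof.
transitivity (\sum_k \sum_l W k l * xlog2x (sr k)).
  by apply: eq_bigr => k _; rewrite -mulr_suml WrowR mul1r.
transitivity (\sum_k \sum_l W k l * xlog2x (lam l)).
  apply: eq_bigr => k _; apply: eq_bigr => l _.
  have [w0|wn0] := eqVneq (w k l) 0.
    by rewrite /W w0 /normsq /= expr0n /= addr0 !mul0r.
  have := eig_w k l; move/eqP; rewrite mulf_eq0 (negbTE wn0) orbF subr_eq0 => /eqP e.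
  by rewrite /sr e.
rewrite exchange_big /=; apply: eq_bigr => l _.
by rewrite -mulr_suml WcolR mul1r.
Qed.

Hypothesis fpsd : forall v, 0 <= Qf v.

Lemma s_real k : s 0 k = (sr k)%:C%C /\ 0 <= sr k.
Proof.
have := fpsd (fun p => conjC (P k (enum_rank p))); rewrite Q_P lecE => /andP [/eqP hi hr].
split => //; rewrite /sr {1}[s 0 k]complexE hi /=.
by rewrite mulr0 addr0.
Qed.

Definition Dl l := complex.Re (Qf (u l)).

Lemma Dl_E l : Dl l = \sum_k sr k * W k l.
Proof.
rewrite /Dl Q_u sumRe; apply: eq_bigr => k _.
by rewrite -WC (proj1 (s_real k)) -rmorphM.
Qed.

Lemma GI (q L : T -> R) :
  (forall l, 0 <= q l) -> \sum_l q l = 1 -> \sum_l Dl l = 1 ->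
  (forall l, q l = 0 -> Dl l = 0) ->
  (forall l, 0 < q l -> L l = log2 (q l)) ->
  \sum_k xlog2x (sr k) = \sum_l Dl l * L l ->
  forall l, Dl l = q l.
Proof.
move=> q0 q1 D1 qD hL heq.
pose tau k l := W k l * (xlog2x (sr k) - sr k * L l) - W k l * (sr k - q l) / ln 2.
have srp k : 0 <= sr k by case: (s_real k).
have Dq0 l k : q l = 0 -> sr k * W k l = 0.
  move=> ql; have := qD l ql; rewrite Dl_E => /psumr_eq0P h; apply: h => // i _.
  by rewrite mulr_ge0 ?W_ge0.
have tauE2 k l : 0 < q l -> tau k l =
    W k l * (sr k * ln (sr k) - sr k * ln (q l) - (sr k - q l)) / ln 2.
  move=> qp; rewrite /tau hL // xlog2xE /log2.
  rewrite -!mulrA -mulrBr; congr (_ * _); rewrite !mulrA -!mulrBl; congr (_ * _).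
have tau_ge0 k l : 0 <= tau k l.
  have [ql|qn] := eqVneq (q l) 0.
    have h := Dq0 l k ql.
    have -> : tau k l = 0.
      rewrite /tau ql subr0 xlog2xE /log2 mulrBr !mulrA [W k l * sr k]mulrC h; lra.
    by [].
  have qp : 0 < q l by rewrite lt_neqAle eq_sym qn q0.
  have [e _] := @elem R (sr k) (q l) (srp k) qp.
  by rewrite tauE2 // divr_ge0 ?mulr_ge0 ?W_ge0 // ltW // (ln2_gt0 R).
have S1 : \sum_k (\sum_l W k l) * xlog2x (sr k) = \sum_k xlog2x (sr k).
  by apply: eq_bigr => k _; rewrite WrowR mul1r.
have S2 : \sum_k \sum_l sr k * W k l * L l = \sum_l Dl l * L l.
  rewrite exchange_big /=; apply: eq_bigr => l _; rewrite Dl_E mulr_suml //.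
have S3 : \sum_k \sum_l sr k * W k l = 1.
  by rewrite exchange_big /= -D1; apply: eq_bigr => l _; rewrite Dl_E.
have S4 : \sum_k \sum_l W k l * q l = 1.
  by rewrite exchange_big /= -q1; apply: eq_bigr => l _; rewrite -mulr_suml WcolR mul1r.
have tauE k l : tau k l = W k l * xlog2x (sr k) - sr k * W k l * L l
     - (sr k * W k l) / ln 2 + (W k l * q l) / ln 2 by rewrite /tau; ring.
have sum_tau : \sum_k \sum_l tau k l = 0.
  under eq_bigr => k _ do under eq_bigr => l _ do rewrite tauE.
  under eq_bigr => k _ do rewrite big_split /= !sumrB -!mulr_suml.
  rewrite big_split /= !sumrB -!mulr_suml S1 S2 S3 S4 heq; ring.
have tau0 k l : tau k l = 0.
  have h2 : \sum_l tau k l = 0.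
    apply: (@psumr_eq0P _ _ xpredT (fun k => \sum_l tau k l)) => //= i _.
    by apply: sumr_ge0 => j _; exact: tau_ge0.
  by apply: (@psumr_eq0P _ _ xpredT (tau k)) => // j _; exact: tau_ge0.
move=> l; have [ql|qn] := eqVneq (q l) 0; first by rewrite ql qD.
have qp : 0 < q l by rewrite lt_neqAle eq_sym qn q0.
rewrite Dl_E -(mul1r (q l)) -(WcolR l) mulr_suml; apply: eq_bigr => k _.
have [W0|Wn0] := eqVneq (W k l) 0; first by rewrite W0 mulr0 mul0r.
have := tau0 k l; rewrite tauE2 // => /eqP.
rewrite mulf_eq0 invr_eq0 (negbTE (lt0r_neq0 (ln2_gt0 R))) orbF mulf_eq0 (negbTE Wn0) /=.
move/eqP => /(proj2 (@elem R (sr k) (q l) (srp k) qp)) ->; exact: mulrC.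
Qed.

End T.

Section D.
Variable (C : comRingType) (I : finType) (T_ : I -> finType).
Lemma sum_prod_dep (F : forall i, T_ i -> C) :
  \sum_(x : {dffun forall i, T_ i}) \prod_i F i (x i) = \prod_i \sum_(t : T_ i) F i t.
Proof.
rewrite (reindex (@dffun_of_fprod I T_)); last exact: onW_bij (dffun_of_fprod_bij T_).
pose P_ i := [ffun t => F i t].
transitivity (\sum_(t : fprod T_) \prod_(i in I) P_ i (t i)).
  by apply: eq_bigr => t _; apply: eq_bigr => i _; rewrite !ffunE.
rewrite big_fprod.
symmetry.
transitivity (\prod_i \sum_(t : T_ i) P_ i t).
  by apply: eq_bigr => i _; apply: eq_bigr => t _; rewrite ffunE.
under eq_bigr => i _ do rewrite (big_tag (fun i t => P_ i t) i).
rewrite bigA_distr_big_dep.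
by [].
Qed.
End D.

Section Q.
Variable R : realType.
Local Notation C := (R[i]).
Variables (N : nat) (d : 'I_N -> nat).
Hypothesis hd : forall i, (0 < d i)%N.
Variable V : Idx d -> C.
Variable U : forall i : 'I_N, 'M[C]_(d i).
Hypothesis hU : forall i, U i \is unitarymx.

Lemma U_rows i (a b : 'I_(d i)) : \sum_t U i a t * conjC (U i b t) = (a == b)%:R.
Proof.
have /unitarymxP /matrixP /(_ a b) := hU i; rewrite !mxE => <-.
by apply: eq_bigr => t _; rewrite !mxE.
Qed.

Lemma U_cols i (s s' : 'I_(d i)) : \sum_t U i t s * conjC (U i t s') = (s' == s)%:R.
Proof.
have : (U i)^t* \is unitarymx by rewrite trmxC_unitary.
move=> /unitarymxP; rewrite trmxCK => /matrixP /(_ s' s); rewrite !mxE => <-.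
by apply: eq_bigr => t _; rewrite !mxE mulrC.
Qed.

Lemma prod_ind (I : finType) (P : pred I) (b : I -> bool) :
  \prod_(k | P k) ((b k)%:R : C) = ([forall k, P k ==> b k])%:R.
Proof.
case: (boolP [forall k, P k ==> b k]) => h.
  by rewrite big1 // => k Pk; move/forallP: h => /(_ k); rewrite Pk /= => ->.
move/forallPn: h => [k]; rewrite negb_imply => /andP [Pk nb].
by rewrite (bigD1 k) //= (negbTE nb) mul0r.
Qed.

Lemma sum_filter_prod (Ap : forall i, pred 'I_(d i)) (H : forall i, 'I_(d i) -> C) :
  \sum_(x : Idx d | [forall i, Ap i (x i)]) \prod_i H i (x i) =
  \prod_i \sum_(t | Ap i t) H i t.
Proof.
rewrite big_mkcond /=.
transitivity (\sum_(x : Idx d) \prod_i (if Ap i (x i) then H i (x i) else 0)).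
  apply: eq_bigr => x _; case: ifP => h.
    by apply: eq_bigr => i _; move/forallP: h => /(_ i) ->.
  move/negbT/forallPn: h => [i nA].
  by rewrite (bigD1 i) //= (negbTE nA) mul0r.
rewrite (sum_prod_dep _ _ _ (fun i t => if Ap i t then H i t else 0)).
by apply: eq_bigr => i _; rewrite -big_mkcond.
Qed.

Local Notation c := (coeff U V).

Definition G (Ap : forall i, pred 'I_(d i)) i (s s' : 'I_(d i)) :=
  \sum_(t | Ap i t) U i t s * conjC (U i t s').

Lemma cc_expand x : conjC (c x) * c x =
  \sum_y \sum_y' conjC (V y) * V y' * \prod_i (U i (x i) (y i) * conjC (U i (x i) (y' i))).
Proof.
rewrite /coeff rmorph_sum big_distrl /=; apply: eq_bigr => y _.
rewrite big_distrr /=; apply: eq_bigr => y' _.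
rewrite big_split /= rmorphM rmorph_prod /=.
under eq_bigr => i _ do rewrite conjCK.
ring.
Qed.

Lemma marg (Ap : forall i, pred 'I_(d i)) :
  \sum_(x : Idx d | [forall i, Ap i (x i)]) conjC (c x) * c x =
  \sum_y \sum_y' conjC (V y) * V y' * \prod_i G Ap i (y i) (y' i).
Proof.
under eq_bigr => x _ do rewrite cc_expand.
rewrite exchange_big /=; apply: eq_bigr => y _.
rewrite exchange_big /=; apply: eq_bigr => y' _.
rewrite -mulr_sumr; congr (_ * _).
exact: (sum_filter_prod Ap (fun i t => U i t (y i) * conjC (U i t (y' i)))).
Qed.

Lemma sum_delta' (I : finType) (z : I) (F : I -> C) : \sum_p (z == p)%:R * F p = F z.
Proof.
rewrite (bigD1 z) //= eqxx mul1r big1 ?addr0 // => p /negbTE.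
by rewrite eq_sym => ->; rewrite mul0r.
Qed.

Section Expand.
Variables (T : finType) (kx : Idx d -> T) (rel : Idx d -> Idx d -> bool).
Variable f : T -> T -> C.
Hypothesis fE : forall p q, f p q = \sum_x \sum_y
  (kx x == p)%:R * (kx y == q)%:R * (rel x y)%:R * (V x * conjC (V y)).

Lemma Qf_expand v : Qf R T f v = \sum_x \sum_y
  (rel x y)%:R * (conjC (v (kx x)) * V x * conjC (V y) * v (kx y)).
Proof.
transitivity (\sum_p \sum_q \sum_x \sum_y conjC (v p) *
   ((kx x == p)%:R * (kx y == q)%:R * (rel x y)%:R * (V x * conjC (V y))) * v q).
  apply: eq_bigr => p _; apply: eq_bigr => q _.
  rewrite fE mulr_sumr mulr_suml; apply: eq_bigr => x _.
  by rewrite mulr_sumr mulr_suml.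
under eq_bigr => p _ do rewrite exchange_big /=.
rewrite exchange_big /=.
under eq_bigr => x _ do under eq_bigr => p _ do rewrite exchange_big /=.
under eq_bigr => x _ do rewrite exchange_big /=.
apply: eq_bigr => x _; apply: eq_bigr => y _.
transitivity (\sum_p (kx x == p)%:R * \sum_q (kx y == q)%:R *
   (conjC (v p) * (rel x y)%:R * (V x * conjC (V y)) * v q)).
  apply: eq_bigr => p _; rewrite mulr_sumr; apply: eq_bigr => q _; ring.
rewrite (sum_delta' _ _ (fun p => \sum_q (kx y == q)%:R *
   (conjC (v p) * (rel x y)%:R * (V x * conjC (V y)) * v q))).
rewrite (sum_delta' _ _ (fun q => 
   (conjC (v (kx x)) * (rel x y)%:R * (V x * conjC (V y)) * v q))).
ring.
Qed.

Hypothesis rel_sym : forall x y, rel x y = rel y x.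

Lemma f_herm p q : f q p = conjC (f p q).
Proof.
rewrite !fE rmorph_sum exchange_big /=; apply: eq_bigr => y _.
rewrite rmorph_sum; apply: eq_bigr => x _.
rewrite !rmorphM /= !conjC_nat conjCK rel_sym; ring.
Qed.

Variable kappa : Idx d -> Idx d.
Hypothesis rel_kappa : forall x y, rel x y = (kappa x == kappa y).

Lemma f_psd v : 0 <= Qf R T f v.
Proof.
rewrite Qf_expand.
pose g x := conjC (v (kx x)) * V x.
suff -> : \sum_x \sum_y (rel x y)%:R * (conjC (v (kx x)) * V x * conjC (V y) * v (kx y))
   = \sum_z (\sum_x (kappa x == z)%:R * g x) * conjC (\sum_y (kappa y == z)%:R * g y).
  by apply: sumr_ge0 => z _; exact: mul_conjC_ge0.
transitivity (\sum_x \sum_y \sum_z (kappa x == z)%:R * g x * conjC ((kappa y == z)%:R * g y)).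
  apply: eq_bigr => x _; apply: eq_bigr => y _.
  rewrite rel_kappa.
  have -> : ((kappa x == kappa y)%:R : C) = \sum_z (kappa x == z)%:R * (kappa y == z)%:R.
    by rewrite (sum_delta' _ _ (fun z => (kappa y == z)%:R)) eq_sym.
  rewrite mulr_suml; apply: eq_bigr => z _.
  rewrite /g !rmorphM /= !conjC_nat conjCK; ring.
rewrite exchange_big /=; under eq_bigr => x _ do rewrite exchange_big /=.
rewrite exchange_big /=; apply: eq_bigr => z _.
rewrite exchange_big /= rmorph_sum big_distrl /=; apply: eq_bigr => x _.
by rewrite big_distrr.
Qed.

End Expand.

Definition rel1 i (x y : Idx d) := [forall k, (k != i) ==> (val (x k) == val (y k))].
Definition rel2 i j (x y : Idx d) :=
  [forall k, ((k != i) && (k != j)) ==> (val (x k) == val (y k))].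

Lemma rel1_sym i x y : rel1 i x y = rel1 i y x.
Proof. by apply/forallP/forallP => h k; have := h k; rewrite [X in _ ==> X]eq_sym. Qed.
Lemma rel2_sym i j x y : rel2 i j x y = rel2 i j y x.
Proof. by apply/forallP/forallP => h k; have := h k; rewrite [X in _ ==> X]eq_sym. Qed.

Definition kappa2 i j (x : Idx d) : Idx d :=
  [ffun k => if (k == i) || (k == j) then Ordinal (hd k) else x k].

Lemma rel2_kappa i j x y : rel2 i j x y = (kappa2 i j x == kappa2 i j y).
Proof.
apply/forallP/eqP.
  move=> h; apply/ffunP => k; rewrite !ffunE; case: ifP => // /negbT.
  rewrite negb_or => hk; apply/val_inj/eqP; by have := h k; rewrite hk.
move=> e k; apply/implyP => hk.
have := congr1 (fun g : Idx d => g k) e; rewrite /= /kappa2 !ffunE.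
have -> : ((k == i) || (k == j)) = false by apply/negbTE; rewrite negb_or.
by move=> ->.
Qed.

Lemma red1E i a b : @red1 R N d V i a b = \sum_(x : Idx d) \sum_(y : Idx d)
  (x i == a)%:R * (y i == b)%:R * (rel1 i x y)%:R * (V x * conjC (V y)).
Proof.
rewrite /red1 big_mkcond /=; apply: eq_bigr => x _.
case: eqP => _ /=; last by rewrite big1 // => y _; rewrite !mul0r.
rewrite big_mkcond /=; apply: eq_bigr => y _.
rewrite -/(rel1 i x y).
by case: (y i == b); case: (rel1 i x y); rewrite /= ?mul1r ?mul0r ?mulr0.
Qed.

Lemma red2E i j p q : @red2 R N d V i j p q = \sum_(x : Idx d) \sum_(y : Idx d)
  ((x i, x j) == p)%:R * ((y i, y j) == q)%:R * (rel2 i j x y)%:R * (V x * conjC (V y)).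
Proof.
case: p => p1 p2; case: q => q1 q2.
rewrite /red2 big_mkcond /=; apply: eq_bigr => x _.
rewrite xpair_eqE.
case: ((x i == p1) && (x j == p2)) => /=; last by rewrite big1 // => y _; rewrite !mul0r.
rewrite big_mkcond /=; apply: eq_bigr => y _.
rewrite -/(rel2 i j x y) xpair_eqE.
by case: (y i == q1); case: (y j == q2); case: (rel2 i j x y); rewrite /= ?mul1r ?mul0r ?mulr0.
Qed.

Lemma red1_herm i a b : @red1 R N d V i b a = conjC (@red1 R N d V i a b).
Proof.
apply: (@f_herm _ (fun x => x i) (rel1 i)) => //; [exact: red1E | exact: rel1_sym].
Qed.

Lemma red2_herm i j p q : @red2 R N d V i j q p = conjC (@red2 R N d V i j p q).
Proof.
apply: (@f_herm _ (fun x => (x i, x j)) (rel2 i j)) => //; [exact: red2E | exact: rel2_sym].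
Qed.

Lemma red2_psd i j v : 0 <= Qf R _ (@red2 R N d V i j) v.
Proof.
apply: (@f_psd _ (fun x => (x i, x j)) (rel2 i j) _ (red2E i j) (kappa2 i j)).
exact: rel2_kappa.
Qed.

Lemma G_pt i (a : 'I_(d i)) s s' :
  \sum_(t | val t == val a) U i t s * conjC (U i t s') = U i a s * conjC (U i a s').
Proof. by rewrite (big_pred1 a) // => t; rewrite /= val_eqE. Qed.

Lemma sum_pt i (a : 'I_(d i)) (P : pred 'I_(d i)) s s' : P =1 pred1 a ->
  \sum_(t | P t) U i t s * conjC (U i t s') = U i a s * conjC (U i a s').
Proof. by move=> hP; rewrite (big_pred1 a). Qed.

Lemma forall_val_eq (P : pred 'I_N) (x y : Idx d) :
  [forall k, P k ==> (val (x k) == val (y k))] = [forall k, P k ==> (x k == y k)].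
Proof. by apply/forallP/forallP => h k; have := h k; rewrite val_eqE. Qed.

Lemma marg1 i (a : 'I_(d i)) :
  \sum_(x : Idx d | x i == a) conjC (c x) * c x = Qf R _ (@red1 R N d V i) (fun p => U i a p).
Proof.
pose Ap : forall k, pred 'I_(d k) := fun k t => (k == i) ==> (val t == val a).
rewrite (eq_bigl (fun x : Idx d => [forall k, Ap k (x k)])); last first.
  move=> x; apply/eqP/forallP => [xa k|h].
    by apply/implyP => /eqP ek; subst k; rewrite xa.
  by have /implyP /(_ (eqxx i)) /eqP hv := h i; apply/val_inj.
rewrite marg (@Qf_expand _ (fun x => x i) (rel1 i) _ (red1E i)).
rewrite [in RHS]exchange_big /=; apply: eq_bigr => y _; apply: eq_bigr => y' _.
rewrite (bigD1 i) //= {1}/G /Ap eqxx /= G_pt.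
under eq_bigr => k hk do rewrite /G /Ap (negbTE hk) /= U_cols.
rewrite prod_ind /rel1 forall_val_eq; ring.
Qed.

Lemma marg2 i j (hij : i != j) (a : 'I_(d i)) (b : 'I_(d j)) :
  \sum_(x : Idx d | (x i == a) && (x j == b)) conjC (c x) * c x =
  Qf R _ (@red2 R N d V i j) (fun p => U i a p.1 * U j b p.2).
Proof.
pose Ap : forall k, pred 'I_(d k) := fun k t =>
  ((k == i) ==> (val t == val a)) && ((k == j) ==> (val t == val b)).
rewrite (eq_bigl (fun x : Idx d => [forall k, Ap k (x k)])); last first.
  move=> x; apply/andP/forallP => [[xa xb] k|h].
    apply/andP; split; apply/implyP => /eqP ek; subst k; by rewrite ?xa ?xb.
  split.
    by have /andP [/implyP /(_ (eqxx i)) /eqP hv _] := h i; apply/eqP/val_inj.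
  by have /andP [_ /implyP /(_ (eqxx j)) /eqP hv] := h j; apply/eqP/val_inj.
rewrite marg (@Qf_expand _ (fun x => (x i, x j)) (rel2 i j) _ (red2E i j)).
rewrite [in RHS]exchange_big /=; apply: eq_bigr => y _; apply: eq_bigr => y' _.
rewrite (bigD1 i) //= (bigD1 j) /=; last by rewrite eq_sym.
rewrite {1}/G /Ap eqxx (negbTE hij) /= (sum_pt _ a); last by move=> t /=; rewrite andbT.
rewrite {1}/G eqxx eq_sym (negbTE hij) /= (sum_pt _ b); last by move=> t.
under eq_bigr => k /andP [hk1 hk2] do rewrite /G (negbTE hk1) (negbTE hk2) /= U_cols.
rewrite prod_ind /rel2 forall_val_eq !rmorphM /=; ring.
Qed.

Lemma marg0 : \sum_(x : Idx d) conjC (c x) * c x = \sum_(x : Idx d) conjC (V x) * V x.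
Proof.
transitivity (\sum_(x : Idx d | [forall k, (fun k (t : 'I_(d k)) => true) k (x k)]) conjC (c x) * c x).
  by apply: eq_bigl => x; apply/esym/forallP.
rewrite (marg (fun k t => true)); apply: eq_bigr => y _.
under eq_bigr => y' _ do under eq_bigr => k _ do rewrite /G U_cols.
rewrite -[RHS](sum_delta' _ y (fun y' => conjC (V y) * V y')).
apply: eq_bigr => y' _; rewrite prod_ind.
have -> : [forall k, true ==> (y' k == y k)] = (y == y').
  apply/forallP/eqP => [h|->]; last by move=> k; rewrite eqxx.
  by apply/ffunP => k; have := h k; rewrite /= => /eqP.
ring.
Qed.

Lemma Qf_eig i (lam : 'I_(d i) -> R)
  (heig : forall (k a : 'I_(d i)), \sum_b @red1 R N d V i a b * U i k b = (lam k)%:C%C * U i k a)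
  (k : 'I_(d i)) : Qf R _ (@red1 R N d V i) (fun p => U i k p) = (lam k)%:C%C.
Proof.
rewrite /Qf.
transitivity (\sum_p (lam k)%:C%C * (U i k p * conjC (U i k p))).
  apply: eq_bigr => p _.
  under eq_bigr => q _ do rewrite -mulrA.
  by rewrite -mulr_sumr heig; ring.
by rewrite -mulr_sumr U_rows eqxx mulr1.
Qed.

End Q.

Local Close Scope sesquilinear_scope.

Section Aux.
Variable R : realType.
Local Notation C := (R[i]).

Lemma sumP_C (I : finType) (Pr : pred I) (z : I -> C) :
  (\sum_(x | Pr x) normsq (z x))%:C%C = \sum_(x | Pr x) conjC (z x) * z x.
Proof.
have -> : (\sum_(x | Pr x) normsq (z x))%:C%C = \sum_(x | Pr x) (normsq (z x))%:C%C.
  by rewrite rmorph_sum.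
by apply: eq_bigr => x _; rewrite normsqC.
Qed.

Lemma sumP_C0 (I : finType) (z : I -> C) :
  (\sum_x normsq (z x))%:C%C = \sum_x conjC (z x) * z x.
Proof. exact: (sumP_C _ xpredT). Qed.

Lemma realC_inj (a b : R) : a%:C%C = b%:C%C -> a = b.
Proof. by move/(congr1 (@complex.Re R)). Qed.

Lemma sum_ind (I : finType) (Pr : pred I) (F : I -> R) :
  \sum_(x | Pr x) F x = \sum_x (Pr x)%:R * F x.
Proof.
rewrite big_mkcond; apply: eq_bigr => x _.
by case: (Pr x); rewrite /= ?mul1r ?mul0r.
Qed.

Lemma sum_partition (I J : finType) (Pr : pred I) (h : I -> J) (F : I -> R) :
  \sum_j \sum_(x | Pr x && (h x == j)) F x = \sum_(x | Pr x) F x.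
Proof.
under eq_bigr => j _ do rewrite big_mkcond.
rewrite exchange_big /= [RHS]big_mkcond; apply: eq_bigr => x _.
case: (Pr x) => /=; last by rewrite big1.
by rewrite -big_mkcond /= (big_pred1 (h x)) // => j; rewrite /= eq_sym.
Qed.
End Aux.

Section Main.
Variable R : realType.
Local Notation C := (R[i]).
Variables (N : nat) (hN : (2 <= N)%N) (d : 'I_N -> nat) (hd : forall i : 'I_N, (0 < d i)%N).
Variable V : Idx d -> C.
Hypothesis hV : \sum_(x : Idx d) normsq (V x) = 1.
Local Notation p1 := (party1 hN).
Hypothesis hI : forall j : 'I_N, j != p1 -> mutinf V p1 j = 0.
Variable U : forall i : 'I_N, 'M[C]_(d i).
Hypothesis hU : forall i : 'I_N, U i \is unitarymx.
Variable lam : forall i : 'I_N, 'I_(d i) -> R.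
Hypothesis heig : forall (i : 'I_N) (k a : 'I_(d i)),
     \sum_(b : 'I_(d i)) red1 V a b * U i k b = (lam i k)%:C%C * U i k a.

Local Notation c := (coeff U V).
Definition Pr (x : Idx d) := normsq (c x).

Lemma P_ge0 x : 0 <= Pr x.
Proof. exact: normsq_ge0. Qed.

Lemma F0 : \sum_x Pr x = 1.
Proof.
apply: realC_inj; rewrite sumP_C0 marg0 //.
by rewrite -sumP_C0 hV.
Qed.

Lemma F1 i (a : 'I_(d i)) : \sum_(x : Idx d | x i == a) Pr x = lam i a.
Proof.
apply: realC_inj; rewrite sumP_C marg1 //.
exact: Qf_eig.
Qed.

Lemma lam_ge0 i a : 0 <= lam i a.
Proof. by rewrite -F1 sumr_ge0 // => x _; exact: P_ge0. Qed.

Lemma lam_sum i : \sum_a lam i a = 1.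
Proof.
rewrite -F0 -(@sum_partition R _ _ xpredT (fun x : Idx d => x i)).
by apply: eq_bigr => a _; rewrite -F1.
Qed.

Lemma uorth1 i (l l' : 'I_(d i)) : \sum_p conjC (U i l p) * U i l' p = (l == l')%:R.
Proof.
rewrite eq_sym -(U_rows _ _ _ _ hU i l' l); apply: eq_bigr => t _; exact: mulrC.
Qed.
Lemma ucompl1 i (p p' : 'I_(d i)) : \sum_l conjC (U i l p) * U i l p' = (p == p')%:R.
Proof.
rewrite -(U_cols _ _ _ _ hU i p' p); apply: eq_bigr => t _; exact: mulrC.
Qed.

Lemma H1E i : H1 V i = - \sum_a xlog2x (lam i a).
Proof.
rewrite /H1 /vN_entropy.
rewrite -(entropy_eig _ _ _ (red1_herm _ _ _ V i) _ (uorth1 i) (ucompl1 i) _ (heig i)).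
by [].
Qed.

Section Pair.
Variable j : 'I_N.
Hypothesis hj : j != p1.
Local Notation T2 := ('I_(d p1) * 'I_(d j))%type.
Local Notation f2 := (@red2 R N d V p1 j).
Definition u2 (l p : T2) := U p1 l.1 p.1 * U j l.2 p.2.
Definition D2 (l : T2) := \sum_(x : Idx d | (x p1 == l.1) && (x j == l.2)) Pr x.

Lemma D2_Dl l : Dl R T2 f2 u2 l = D2 l.
Proof.
rewrite /Dl /u2.
have hij : p1 != j by rewrite eq_sym.
rewrite -(marg2 _ _ _ V _ hU _ _ hij l.1 l.2) -sumP_C.
by [].
Qed.

Lemma nat_and (a b : bool) : ((a && b)%:R : C) = a%:R * b%:R.
Proof. by case: a; case: b; rewrite /= ?mul1r ?mul0r. Qed.

Lemma uorth2 l l' : \sum_p conjC (u2 l p) * u2 l' p = (l == l')%:R.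
Proof.
rewrite /u2 -(pair_bigA _ (fun s t => conjC (U p1 l.1 s * U j l.2 t) * (U p1 l'.1 s * U j l'.2 t))) /=.
transitivity ((\sum_s conjC (U p1 l.1 s) * U p1 l'.1 s) * (\sum_t conjC (U j l.2 t) * U j l'.2 t)).
  rewrite big_distrl; apply: eq_bigr => s _; rewrite big_distrr; apply: eq_bigr => t _.
  by rewrite rmorphM /=; ring.
rewrite !uorth1; case: l => a b; case: l' => a' b'.
by rewrite xpair_eqE nat_and.
Qed.

Lemma ucompl2 p p' : \sum_l conjC (u2 l p) * u2 l p' = (p == p')%:R.
Proof.
rewrite /u2 -(pair_bigA _ (fun s t => conjC (U p1 s p.1 * U j t p.2) * (U p1 s p'.1 * U j t p'.2))) /=.
transitivity ((\sum_s conjC (U p1 s p.1) * U p1 s p'.1) * (\sum_t conjC (U j t p.2) * U j t p'.2)).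
  rewrite big_distrl; apply: eq_bigr => s _; rewrite big_distrr; apply: eq_bigr => t _.
  by rewrite rmorphM /=; ring.
rewrite !ucompl1; case: p => a b; case: p' => a' b'.
by rewrite xpair_eqE nat_and.
Qed.

Lemma D2_ge0 l : 0 <= D2 l.
Proof. by apply: sumr_ge0 => x _; exact: P_ge0. Qed.

Lemma D2_row a : \sum_b D2 (a, b) = lam p1 a.
Proof.
rewrite -F1 -(@sum_partition R _ _ (fun x : Idx d => x p1 == a) (fun x : Idx d => x j)).
by [].
Qed.

Lemma D2_col b : \sum_a D2 (a, b) = lam j b.
Proof.
rewrite -F1 -(@sum_partition R _ _ (fun x : Idx d => x j == b) (fun x : Idx d => x p1)).
apply: eq_bigr => a _; apply: eq_bigl => x /=; exact: andbC.
Qed.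

Lemma D2_sum : \sum_l D2 l = 1.
Proof.
rewrite -(pair_bigA _ (fun a b => D2 (a, b))) /=.
under eq_bigr => a _ do rewrite D2_row.
exact: lam_sum.
Qed.

Lemma D2_prod l : D2 l = lam p1 l.1 * lam j l.2.
Proof.
pose q (l : T2) := lam p1 l.1 * lam j l.2.
pose L (l : T2) := log2 (lam p1 l.1) + log2 (lam j l.2).
have q0 l' : 0 <= q l' by rewrite mulr_ge0 ?lam_ge0.
have q1 : \sum_l' q l' = 1.
  rewrite -(pair_bigA _ (fun a b => lam p1 a * lam j b)) /=.
  under eq_bigr => a _ do rewrite -mulr_sumr lam_sum mulr1.
  exact: lam_sum.
have D1 : \sum_l' Dl R T2 f2 u2 l' = 1.
  by under eq_bigr => l' _ do rewrite D2_Dl; exact: D2_sum.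
have qD l' : q l' = 0 -> Dl R T2 f2 u2 l' = 0.
  case: l' => a b; rewrite /q /= D2_Dl => /eqP; rewrite mulf_eq0 => /orP [] /eqP h.
    have := D2_row a; rewrite h => h0.
    by apply: (@psumr_eq0P _ _ xpredT (fun b => D2 (a, b))) => // b' _; exact: D2_ge0.
  have := D2_col b; rewrite h => h0.
  by apply: (@psumr_eq0P _ _ xpredT (fun a => D2 (a, b))) => // a' _; exact: D2_ge0.
have hL l' : 0 < q l' -> L l' = log2 (q l').
  case: l' => a b; rewrite /q /L /= => hq.
  have ha : 0 < lam p1 a.
    rewrite lt_neqAle lam_ge0 andbT eq_sym; apply: contraTneq hq => ->; by rewrite mul0r ltxx.
  have hb : 0 < lam j b.
    rewrite lt_neqAle lam_ge0 andbT eq_sym; apply: contraTneq hq => ->; by rewrite mulr0 ltxx.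
  by rewrite /log2 lnM ?posrE // mulrDl.
have heq : \sum_k xlog2x (sr R T2 f2 k) = \sum_l' Dl R T2 f2 u2 l' * L l'.
  have h := hI j hj; rewrite /mutinf !H1E /H2 /vN_entropy in h.
  have -> : \sum_l' Dl R T2 f2 u2 l' * L l' =
      \sum_a xlog2x (lam p1 a) + \sum_b xlog2x (lam j b).
    under eq_bigr => l' _ do rewrite D2_Dl /L mulrDr.
    rewrite big_split /=; congr (_ + _).
      rewrite -(pair_bigA _ (fun a b => D2 (a, b) * log2 (lam p1 a))) /=.
      apply: eq_bigr => a _; rewrite -mulr_suml D2_row xlog2xE //.
    rewrite -(pair_bigA _ (fun a b => D2 (a, b) * log2 (lam j b))) /= exchange_big /=.
    apply: eq_bigr => b _; rewrite -mulr_suml D2_col xlog2xE //.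
  rewrite /sr; lra.
have := @GI R T2 f2 (red2_herm _ _ _ V p1 j) u2 uorth2 ucompl2 (red2_psd _ _ _ hd V p1 j)
   q L q0 q1 D1 qD hL heq l.
by rewrite D2_Dl.
Qed.

End Pair.

Lemma ind_identity (a b : bool) (p : R) :
  (~~ a && ~~ b)%:R * p = p - a%:R * p - b%:R * p + (a && b)%:R * p.
Proof. by case: a; case: b; rewrite /=; ring. Qed.

Local Notation z i := (Ordinal (hd i)).

Lemma E0 i : \sum_(x : Idx d | val (x i) == 0%N) Pr x = lam i (z i).
Proof. by rewrite -F1; apply: eq_bigl => x; rewrite -val_eqE. Qed.

Lemma E1 : \sum_(x : Idx d | val (x p1) != 0%N) Pr x = 1 - lam p1 (z p1).
Proof.
have := F0; rewrite (bigID (fun x : Idx d => val (x p1) == 0%N)) /= E0 => h.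
rewrite -h; lra.
Qed.

Lemma E2 j (hj : j != p1) :
  \sum_(x : Idx d | (val (x p1) != 0%N) && (val (x j) != 0%N)) Pr x =
  (1 - lam p1 (z p1)) * (1 - lam j (z j)).
Proof.
have hz : \sum_(x : Idx d | (val (x p1) == 0%N) && (val (x j) == 0%N)) Pr x =
    lam p1 (z p1) * lam j (z j).
  rewrite -(D2_prod j hj (z p1, z j)) /D2; apply: eq_bigl => x.
  by rewrite -!val_eqE.
have e0 := E0 p1; have e1 := E0 j; have f0 := F0.
rewrite sum_ind in e0; rewrite sum_ind in e1; rewrite sum_ind in hz; rewrite sum_ind.
have -> : \sum_(x : Idx d) ((val (x p1) != 0%N) && (val (x j) != 0%N))%:R * Pr x =
   \sum_(x : Idx d) Pr x - \sum_(x : Idx d) (val (x p1) == 0%N)%:R * Pr x - \sum_(x : Idx d) (val (x j) == 0%N)%:R * Pr x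
   + \sum_(x : Idx d) ((val (x p1) == 0%N) && (val (x j) == 0%N))%:R * Pr x.
  rewrite -!sumrB -big_split; apply: eq_bigr => x _.
  exact: ind_identity.
rewrite f0 e0 e1 hz; ring.
Qed.

Lemma pointwise (a t : bool) (p : R) (bs : 'I_N -> bool) : 0 <= p ->
  (a -> ~~ t -> exists j0, (j0 != p1) && bs j0) ->
  a%:R * p <= (a && t)%:R * p + \sum_(j | j != p1) (a && bs j)%:R * p.
Proof.
move=> hp ht.
have hs : 0 <= \sum_(j | j != p1) (a && bs j)%:R * p.
  by apply: sumr_ge0 => j _; rewrite mulr_ge0 ?ler0n.
case: a ht hs => /= ht hs; last by rewrite [X in X <= _]mul0r [X in _ <= X + _]mul0r add0r.
case: (boolP t) => htt.
  by rewrite mul1r lerDl.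
have [j0 /andP [hj0 hb]] := ht isT htt.
rewrite mul0r add0r mul1r (bigD1 j0) //= hb mul1r lerDl.
by apply: sumr_ge0 => j _; rewrite mulr_ge0 ?ler0n.
Qed.

Lemma E3 :
  \sum_(x : Idx d | val (x p1) != 0%N) Pr x -
  \sum_(j | j != p1) \sum_(x : Idx d | (val (x p1) != 0%N) && (val (x j) != 0%N)) Pr x <=
  \sum_(x : Idx d | (val (x p1) != 0%N) &&
          [forall i, (i != p1) ==> (val (x i) == 0%N)]) Pr x.
Proof.
rewrite lerBlDr.
rewrite (@sum_ind R _ (fun x : Idx d => val (x p1) != 0%N)).
rewrite (@sum_ind R _ (fun x : Idx d => (val (x p1) != 0%N) &&
   [forall i, (i != p1) ==> (val (x i) == 0%N)])).
under [X in _ <= _ + X]eq_bigr => j _ do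
  rewrite (@sum_ind R _ (fun x : Idx d => (val (x p1) != 0%N) && (val (x j) != 0%N))).
rewrite [X in _ <= _ + X]exchange_big -big_split.
apply: ler_sum => x _; apply: pointwise; first exact: P_ge0.
move=> _ /forallPn [j0]; rewrite negb_imply => /andP [hj0 hx0].
by exists j0; rewrite hj0.
Qed.

Lemma final : let eps := fun i : 'I_N => 1 - lam i (Ordinal (hd i)) in
  let varepsilon := \sum_(i < N) eps i in
  \sum_(x : Idx d | (val (x (party1 hN)) != 0%N) &&
          [forall i, (i != party1 hN) ==> (val (x i) == 0%N)])
     normsq (coeff U V x)
  >= eps (party1 hN) * (1 + eps (party1 hN) - varepsilon).
Proof.
cbv beta zeta.
have h3 := E3; rewrite E1 in h3.
rewrite (eq_bigr (fun j => (1 - lam p1 (z p1)) * (1 - lam j (z j)))) in h3; last first.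
  by move=> j hj; rewrite E2.
rewrite -mulr_sumr in h3.
have hv : \sum_(i < N) (1 - lam i (z i)) =
   (1 - lam p1 (z p1)) + \sum_(j | j != p1) (1 - lam j (z j)) by rewrite (bigD1 p1).
rewrite hv; move: h3; rewrite /Pr.
set S := \sum_(j | j != p1) _.
set T := \sum_(x : Idx d | _) _.
move=> h3.
have -> : (1 - lam p1 (z p1)) * (1 + (1 - lam p1 (z p1)) - (1 - lam p1 (z p1) + S)) =
  1 - lam p1 (z p1) - (1 - lam p1 (z p1)) * S by ring.
exact: h3.
Qed.

End Main.

Theorem lemma2 (R : realType) (N : nat) (hN : (2 <= N)%N)
  (d : 'I_N -> nat) (hd : forall i : 'I_N, (0 < d i)%N)
  (V : Idx d -> R[i])
  (hV : \sum_(x : Idx d) normsq (V x) = 1)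
  (hI : forall j : 'I_N, j != party1 hN -> mutinf V (party1 hN) j = 0)
  (U : forall i : 'I_N, 'M[R[i]]_(d i))
  (hU : forall i : 'I_N, U i \is unitarymx)
  (lam : forall i : 'I_N, 'I_(d i) -> R)
  (hlam_dec : forall (i : 'I_N) (k l : 'I_(d i)), (k <= l)%N -> lam i l <= lam i k)
  (heig : forall (i : 'I_N) (k a : 'I_(d i)),
     \sum_(b : 'I_(d i)) red1 V a b * U i k b = (lam i k)%:C%C * U i k a) :
  let eps := fun i : 'I_N => 1 - lam i (Ordinal (hd i)) in
  let varepsilon := \sum_(i < N) eps i in
  \sum_(x : Idx d | (val (x (party1 hN)) != 0%N) &&
          [forall i, (i != party1 hN) ==> (val (x i) == 0%N)])
     normsq (coeff U V x)
  >= eps (party1 hN) * (1 + eps (party1 hN) - varepsilon).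
Proof. exact: (@final R N hN d hd V hV hI U hU lam heig). Qed.
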